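(* Let $E$ be a finite-dimensional real vector space, let $C$ be a nonzero nondegenerate cone of $E$, and let $u$ be an endomorphism of $E$ with $u(C)\subseteq C$. Put $v=\mathrm{id}_E+u$ and $C'=\bigcap_{n\geq 0}v^n(C)$. Then $C'$ is a nonzero nondegenerate cone contained in $C$, $u(C')\subseteq C'$, and $v(C')=C'$.
   Context: A cone of a finite-dimensional real vector space $E$ is a closed subset $C\subseteq E$ that contains $0$ and is stable under addition of vectors and under multiplication by positive scalars. A cone $C$ is nondegenerate if $C\cap(-C)=\{0\}$, and nonzero if it contains a nonzero vector. *)

(* Defs.v *)
From HB Require Import structures.
From mathcomp Require Import all_boot all_order all_algebra.
From mathcomp Require Import all_classical all_reals all_analysis.
Set Implicit Arguments. Unset Strict Implicit. Unset Printing Implicit Defensive.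
Import Order.TTheory GRing.Theory Num.Theory.
Import numFieldNormedType.Exports.
Local Open Scope classical_set_scope.
Local Open Scope ring_scope.

(* E is modelled as 'rV[R]_n (a finite-dimensional real vector space, R : realType),
   with its canonical (normed) topology. *)

Definition is_cone (R : realType) (n : nat) (C : set 'rV[R]_n) : Prop :=
  [/\ closed C, C 0,
      (forall x y, C x -> C y -> C (x + y)) &
      (forall (t : R) x, 0 < t -> C x -> C (t *: x))].

Definition nondegenerate_cone (R : realType) (n : nat) (C : set 'rV[R]_n) : Prop :=
  C `&` [set x | C (- x)] = [set 0].

Definition nonzero_cone (R : realType) (n : nat) (C : set 'rV[R]_n) : Prop :=
  exists x, C x /\ x != 0.

(* Main.v *)
Require Import Defs.
From HB Require Import structures.
From mathcomp Require Import all_boot all_order all_algebra.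
From mathcomp Require Import all_classical all_reals all_analysis.
From mathcomp Require Import finmap.
Import Order.TTheory GRing.Theory Num.Theory.
Import numFieldNormedType.Exports.
Local Open Scope classical_set_scope.
Local Open Scope ring_scope.

Section S.
Variables (R : realType) (n : nat).
Implicit Types x y : 'rV[R]_n.



Lemma coord_le x (j : 'I_n) : `|x 0 j| <= `|x|.
Proof.
rewrite [leRHS]/Num.norm /= mx_normrE; apply/bigmax_geP; right => /=.
by exists (0, j).
Qed.

Lemma lin_bound (u : {linear 'rV[R]_n -> 'rV[R]_n}) :
  exists K : R, 0 < K /\ forall x, `|u x| <= K * `|x|.
Proof.
exists (1 + \sum_(j < n) `|u (delta_mx 0 j)|); split.
  by rewrite ltr_wpDr // sumr_ge0.
move=> x; rewrite {1}(row_sum_delta x) linear_sum /=.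
apply: le_trans (ler_norm_sum _ _ _) _.
rewrite mulrDl mul1r mulr_suml ler_wpDl //.
apply: ler_sum => j _; rewrite linearZ /= normrZ mulrC ler_wpM2l //.
exact: coord_le.
Qed.

Lemma lin_cont (u : {linear 'rV[R]_n -> 'rV[R]_n}) : continuous u.
Proof.
have [K [K0 HK]] := lin_bound u.
move=> x; apply/(@cvgrPdist_lt _ _ _ (nbhs x)) => e e0.
near=> z.
rewrite -linearB /=; apply: le_lt_trans (HK _) _.
rewrite -ltr_pdivlMl //.
near: z; apply: cvgr_dist_lt => //.
by rewrite mulr_gt0 ?invr_gt0.
Unshelve. all: by end_near. Qed.

Lemma key_bound (C : set 'rV[R]_n) (f : 'rV[R]_n -> 'rV[R]_n) :
  closed C -> (forall (t : R) x, 0 < t -> C x -> C (t *: x)) ->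
  continuous f -> (forall (a : R) x, f (a *: x) = a *: f x) ->
  (forall x, C x -> f x = 0 -> x = 0) ->
  exists m : R, 0 < m /\ forall x, C x -> m * `|x| <= `|f x|.
Proof.
move=> Ccl Cs fc fs fker.
set S := C `&` [set x | `|x| = 1].
have Scl : closed S.
  apply: closedI => //.
  have -> : [set x | `|x| = 1] = (Num.norm : 'rV[R]_n -> R) @^-1` [set 1 : R] by [].
  apply: preimage_closed; last exact: closed_eq.
  by move=> x _; apply: norm_continuous.
have Sc : compact S.
  apply: bounded_closed_compact => //.
  rewrite /= /bounded_near; near=> M => x [_ /= ->].
  near: M; apply: nbhs_pinfty_ge; exact: num_real.
have fSc : compact (f @` S) by apply: continuous_compact => //; exact: continuous_subspaceT.
have fScl : closed (f @` S) by apply: compact_closed => //; exact: norm_hausdorff.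
have : open (~` (f @` S)) by exact: closed_openC.
rewrite openE => /(_ 0) Hop.
have /nbhs_ballP [e e0 He] : nbhs (0 : 'rV[R]_n) (~` (f @` S)).
  apply: Hop; move=> [x [Cx /= x1] fx0].
  by move: x1; rewrite (fker x Cx fx0) normr0 => /eqP; rewrite eq_sym oner_eq0.
exists e; split => // x Cx.
have [->|x0] := eqVneq x 0; first by rewrite normr0 mulr0.
have nx0 : 0 < `|x| by rewrite normr_gt0.
have Sx : S (`|x|^-1 *: x).
  split; first by apply: Cs => //; rewrite invr_gt0.
  by rewrite /= normrZ normrV ?unitfE ?normr_eq0 // normr_id mulVf // normr_eq0.
have : ~~ (`|f (`|x|^-1 *: x)| < e).
  apply/negP => H; apply: (He (f (`|x|^-1 *: x))); last by exists (`|x|^-1 *: x).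
  by rewrite -ball_normE /= sub0r normrN.
rewrite fs normrZ normrV ?unitfE ?normr_eq0 // normr_id.
rewrite -leNgt ler_pdivlMl // => H.
by rewrite mulrC.
Unshelve. all: by end_near. Qed.

Lemma image_closed (C : set 'rV[R]_n) (f : 'rV[R]_n -> 'rV[R]_n) :
  closed C -> (forall (t : R) x, 0 < t -> C x -> C (t *: x)) ->
  continuous f -> (forall (a : R) x, f (a *: x) = a *: f x) ->
  (forall x, C x -> f x = 0 -> x = 0) ->
  closed (f @` C).
Proof.
move=> Ccl Cs fc fs fker.
have [m [m0 Hm]] := @key_bound C f Ccl Cs fc fs fker.
move=> y Hy.
set M := (`|y| + 1) / m.
set A := C `&` [set x | `|x| <= M].
have Acl : closed A.
  apply: closedI => //.
  have -> : [set x | `|x| <= M] = (Num.norm : 'rV[R]_n -> R) @^-1` [set r | r <= M] by [].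
  apply: preimage_closed; last exact: closed_le.
  by move=> x _; apply: norm_continuous.
have Ac : compact A.
  apply: bounded_closed_compact => //.
  rewrite /= /bounded_near; near=> M' => x [_ /= h].
  apply: le_trans h _.
  near: M'; apply: nbhs_pinfty_ge; exact: num_real.
have fAc : compact (f @` A) by apply: continuous_compact => //; exact: continuous_subspaceT.
have fAcl : closed (f @` A) by apply: compact_closed => //; exact: norm_hausdorff.
suff : (f @` A) y by move=> [x [Cx _] <-]; exists x.
apply: fAcl => B nB.
have nB1 : nbhs y (B `&` ball y 1) by apply: filterI => //; exact: nbhsx_ballx.
have [z [[x Cx <-] [Bfx Bfx1]]] := Hy _ nB1.
exists (f x); split => //; exists x => //; split => //=.
rewrite /M ler_pdivlMr // mulrC.
apply: le_trans (Hm _ Cx) _.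
move: Bfx1; rewrite -ball_normE /= => h.
have -> : f x = y - (y - f x) by rewrite subKr.
apply: le_trans (ler_normB _ _) _.
by rewrite lerD2l ltW.
Unshelve. all: by end_near. Qed.
End S.

Lemma fin_nat (D' : {fset nat}) : exists N, forall i, i \in D' -> (i <= N)%N.
Proof.
exists (\max_(i <- D') i)%N => i iD.
by apply: (@leq_bigmax_seq _ _ xpredT (fun i => i) i).
Qed.

Theorem mainTheorem11 (R : realType) (n : nat) (C : set 'rV[R]_n)
    (u : {linear 'rV[R]_n -> 'rV[R]_n}) :
  is_cone C -> nondegenerate_cone C -> nonzero_cone C ->
  u @` C `<=` C ->
  let v := fun x : 'rV[R]_n => x + u x in
  let C' := \bigcap_(k in [set: nat]) (iter k v @` C) in
  [/\ is_cone C' /\ nondegenerate_cone C' /\ nonzero_cone C', C' `<=` C,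
      u @` C' `<=` C' & v @` C' = C'].
Proof.
move=> [Ccl C0 CD CZ] Cnd [x0 [Cx0 x0n0]] uC v C'.
have uCx x : C x -> C (u x) by move=> Cx; apply: uC; exists x.
have ndg x : C x -> C (- x) -> x = 0.
  by move=> Cx Cnx; have : (C `&` [set x | C (- x)]) x by []; rewrite Cnd.
set G := fun k => iter k v @` C.
have vD x y : v (x + y) = v x + v y by rewrite /v linearD addrACA.
have vZ (a : R) x : v (a *: x) = a *: v x by rewrite /v linearZ scalerDr.
have iD k x y : iter k v (x + y) = iter k v x + iter k v y.
  by elim: k => [|k IH] //=; rewrite IH vD.
have iZ k (a : R) x : iter k v (a *: x) = a *: iter k v x.
  by elim: k => [|k IH] //=; rewrite IH vZ.
have i0 k : iter k v 0 = 0.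
  by elim: k => [|k IH] //=; rewrite IH /v linear0 addr0.
have vc : continuous v.
  move=> x; apply: (@continuousD _ _ _ id (fun x => u x) x).
    exact: cvg_id.
  exact: lin_cont.
have ic k : continuous (iter k v).
  elim: k => [|k IH] x /=; first exact: cvg_id.
  exact: (continuous_comp (IH x) (vc _)).
have vC x : C x -> C (v x) by move=> Cx; apply: CD => //; exact: uCx.
have iC k x : C x -> C (iter k v x) by elim: k => [|k IH] //= Cx; apply: vC; apply: IH.
have vker x : C x -> v x = 0 -> x = 0.
  move=> Cx /eqP; rewrite addr_eq0 => /eqP ux.
  by apply: ndg => //; rewrite {1}ux opprK; apply: uCx.
have iker k x : C x -> iter k v x = 0 -> x = 0.
  elim: k => [|k IH] //= Cx h; apply: IH => //; apply: vker => //; exact: iC.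
have ucomm k x : u (iter k v x) = iter k v (u x).
  by elim: k => [|k IH] //=; rewrite -IH /v linearD.
have Gdec j k : (j <= k)%N -> G k `<=` G j.
  move=> jk _ [c Cc <-]; exists (iter (k - j) v c); first exact: iC.
  by rewrite -iterD subnKC.
have GC k : G k `<=` C by move=> y /(Gdec 0 k (leq0n k)) [c Cc <-].
have Gcl k : closed (G k).
  apply: (@image_closed R n C (iter k v) Ccl CZ (ic k) (iZ k) (iker k)).
have FIP (K : set 'rV[R]_n) : compact K ->
    (forall N, exists p, K p /\ G N p) -> exists p, K p /\ forall k, G k p.
  move=> Kc HN.
  move: Kc; rewrite compact_In0 => /(_ nat setT (fun k => K `&` G k)) [].
  - by exists G => // k _.
  - move=> D' _; have [N HNi] := fin_nat D'.
    have [p [Kp GNp]] := HN N.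
    exists p => i /= iDp; split => //; exact: (Gdec i N (HNi i iDp)).
  move=> p Hp; exists p; split; first by have [] := Hp 0%N I.
  by move=> k; have [] := Hp k I.
have C'C : C' `<=` C by move=> y /(_ 0%N I); apply: GC.
split.
- split; [split|split].
  + apply: closed_bigI => k _; exact: Gcl.
  + by move=> k _; exists 0 => //; rewrite i0.
  + move=> y z Hy Hz k _.
    have [c Cc <-] := Hy k I; have [d Cd <-] := Hz k I.
    by exists (c + d); [exact: CD | rewrite iD].
  + move=> t y t0 Hy k _; have [c Cc <-] := Hy k I.
    by exists (t *: c); [exact: CZ | rewrite iZ].
  + apply/seteqP; split.
      move=> y [Hy Hny]; apply: ndg; [exact: C'C | exact: C'C].
    by move=> y /= ->; split => k _; exists 0 => //; rewrite ?oppr0 i0.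
  + set K := C `&` [set x | `|x| = 1].
    have Kc : compact K.
      apply: bounded_closed_compact.
        rewrite /= /bounded_near; near=> M => x [_ /= ->].
        near: M; apply: nbhs_pinfty_ge; exact: num_real.
      apply: closedI => //.
      have -> : [set x | `|x| = 1] = (Num.norm : 'rV[R]_n -> R) @^-1` [set 1 : R] by [].
      apply: preimage_closed; last exact: closed_eq.
      by move=> x _; apply: norm_continuous.
    have [|p [[_ /= p1] Gp]] := FIP K Kc.
      move=> N; set w := iter N v x0.
      have w0 : w != 0 by apply/eqP => /(iker N x0 Cx0)/eqP; rewrite (negPf x0n0).
      have nw0 : 0 < `|w| by rewrite normr_gt0.
      exists (`|w|^-1 *: w); split; last first.
        by exists (`|w|^-1 *: x0); [apply: CZ; rewrite ?invr_gt0 | rewrite iZ].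
      split.
        by apply: (GC N); exists (`|w|^-1 *: x0); [apply: CZ; rewrite ?invr_gt0 | rewrite iZ].
      by rewrite /= normrZ normrV ?unitfE ?normr_eq0 // normr_id mulVf // normr_eq0.
    exists p; split; first by move=> k _; exact: Gp.
    by apply/eqP => p0; move: p1; rewrite p0 normr0 => /eqP; rewrite eq_sym oner_eq0.
- exact: C'C.
- move=> _ [y Hy <-] k _; have [c Cc <-] := Hy k I.
  by exists (u c); [exact: uCx | rewrite ucomm].
- apply/seteqP; split.
    move=> _ [y Hy <-] k _; have [c Cc <-] := Hy k I.
    apply: (Gdec k k.+1 (leqnSn k)); exists c => //.
  move=> y Hy.
  have [m [m0 Hm]] := @key_bound R n C v Ccl CZ vc vZ vker.
  set K := C `&` (v @^-1` [set y]).
  have Kc : compact K.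
    apply: bounded_closed_compact.
      rewrite /= /bounded_near; near=> M => x [Cx /= vx].
      have := Hm x Cx; rewrite vx -ler_pdivlMl // => h.
      apply: le_trans h _.
      near: M; apply: nbhs_pinfty_ge; exact: num_real.
    apply: closedI => //; apply: preimage_closed.
      by move=> x _; apply: vc.
    by apply: compact_closed; [exact: norm_hausdorff | exact: compact_set1].
  have [|z [[Cz /= vz] Gz]] := FIP K Kc.
    move=> N; have [c Cc yc] := Hy N.+1 I.
    exists (iter N v c); split; last by exists c.
    by split; [exact: iC | rewrite /= -yc].
  by exists z => // k _; exact: Gz.
Unshelve. all: by end_near. Qed.
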